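(* Let $X,Y\subseteq\omega$ and let $\prec_X$, $\prec_Y$ be transitive relations on $X$ and $Y$ respectively. Assume $f:X\to Y$ is a function which is surjective and satisfies $x\prec_X x'\iff f(x)\prec_Y f(x')$ for all $x,x'\in X$. Let $G_f=\{\langle x,f(x)\rangle\mid x\in X\}$. Then the map $\llbracket G_f\rrbracket$, given by $\llbracket G_f\rrbracket(I)=\{n\mid(\exists m\in I)\,\langle m,n\rangle\in G_f\}$, is a homeomorphism from $\mathcal{I}(\prec_X)$ onto $\mathcal{I}(\prec_Y)$. Moreover, if $\prec_X$ and $\prec_Y$ are c.e. and $f$ is computable, then $\llbracket G_f\rrbracket$ is a computable homeomorphism.
   Context: For a transitive relation $\prec$ on a set $S$, an ideal is a non-empty set $I\subseteq S$ that is a lower set ($b\prec a\in I\Rightarrow b\in I$) and directed (for $a,b\in I$ there is $c\in I$ with $a\prec c$, $b\prec c$). $\mathcal{I}(\prec)$ is the space of ideals with topology generated by $[n]_\prec=\{I\mid n\in I\}$, $n\in S$, an effective space with basic opens numbered by $n$. $\langle\cdot,\cdot\rangle$ is a computable pairing bijection on $\omega$. A computable homeomorphism is a homeomorphism such that preimages of basic open sets under it and its inverse are uniformly c.e. unions of basic open sets. *)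

(* Defs.v *)
(* Subsets of omega are predicates nat -> Prop. *)
From Stdlib Require Import Arith List Cantor.
Import ListNotations.

Definition pair (a b : nat) : nat := Cantor.to_nat (a, b).
Definition unpair1 (n : nat) : nat := fst (Cantor.of_nat n).
Definition unpair2 (n : nat) : nat := snd (Cantor.of_nat n).

Inductive code : Type :=
| cZ | cS | cI | cL | cR
| cComp (f g : code)
| cPair (f g : code)
| cRec (f g : code)
| cMu (f : code).

Inductive eval : code -> nat -> nat -> Prop :=
| ev_Z x : eval cZ x 0
| ev_S x : eval cS x (S x)
| ev_I x : eval cI x x
| ev_L x : eval cL x (unpair1 x)
| ev_R x : eval cR x (unpair2 x)
| ev_Comp f g x y z : eval g x y -> eval f y z -> eval (cComp f g) x z
| ev_Pair f g x a b : eval f x a -> eval g x b -> eval (cPair f g) x (pair a b)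
| ev_Rec0 f g a y : eval f a y -> eval (cRec f g) (pair a 0) y
| ev_RecS f g a n y z :
    eval (cRec f g) (pair a n) y -> eval g (pair a (pair n y)) z ->
    eval (cRec f g) (pair a (S n)) z
| ev_Mu f x n :
    eval f (pair x n) 0 ->
    (forall k, k < n -> exists v, eval f (pair x k) (S v)) ->
    eval (cMu f) x n.

Definition ce (A : nat -> Prop) : Prop :=
  exists c, forall x, A x <-> exists y, eval c x y.

Definition ce_rel (S : nat -> Prop) (R : nat -> nat -> Prop) : Prop :=
  ce (fun p => exists a b, p = pair a b /\ S a /\ S b /\ R a b).

Definition computable_on (X : nat -> Prop) (f : nat -> nat) : Prop :=
  exists c, forall x, X x -> eval c x (f x).

Definition transitive_on (S : nat -> Prop) (R : nat -> nat -> Prop) : Prop :=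
  forall a b c, S a -> S b -> S c -> R a b -> R b c -> R a c.

Definition ideal (S : nat -> Prop) (R : nat -> nat -> Prop) (I : nat -> Prop) : Prop :=
  (forall n, I n -> S n) /\
  (exists n, I n) /\
  (forall a b, S b -> R b a -> I a -> I b) /\
  (forall a b, I a -> I b -> exists c, I c /\ R a c /\ R b c).

Definition same (A B : nat -> Prop) : Prop := forall n, A n <-> B n.

(* U (a set of points of I(R) on S) is open in the topology generated by the
   basic sets [n] = {I | n in I}, n in S: every point of U lies in a finite
   intersection of basic sets contained in U. *)
Definition open_ideal (S : nat -> Prop) (R : nat -> nat -> Prop)
  (U : (nat -> Prop) -> Prop) : Prop :=
  forall I, ideal S R I -> U I ->
    exists l : list nat, Forall S l /\ Forall I l /\
      (forall J, ideal S R J -> Forall J l -> U J).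

Definition continuous_ideal (SX : nat -> Prop) (RX : nat -> nat -> Prop)
  (SY : nat -> Prop) (RY : nat -> nat -> Prop)
  (F : (nat -> Prop) -> (nat -> Prop)) : Prop :=
  forall n, SY n -> open_ideal SX RX (fun I => F I n).

(* F is a homeomorphism from I(RX) onto I(RY) with inverse G
   (points are identified up to extensional equality of sets). *)
Definition homeo_with (SX : nat -> Prop) (RX : nat -> nat -> Prop)
  (SY : nat -> Prop) (RY : nat -> nat -> Prop)
  (F G : (nat -> Prop) -> (nat -> Prop)) : Prop :=
  (forall I, ideal SX RX I -> ideal SY RY (F I)) /\
  (forall J, ideal SY RY J -> ideal SX RX (G J)) /\
  (forall I, ideal SX RX I -> same (G (F I)) I) /\
  (forall J, ideal SY RY J -> same (F (G J)) J) /\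
  (forall I I', ideal SX RX I -> ideal SX RX I' -> same I I' -> same (F I) (F I')) /\
  (forall J J', ideal SY RY J -> ideal SY RY J' -> same J J' -> same (G J) (G J')) /\
  continuous_ideal SX RX SY RY F /\
  continuous_ideal SY RY SX RX G.

Definition homeomorphism SX RX SY RY F : Prop :=
  exists G, homeo_with SX RX SY RY F G.

(* preimages of basic opens under F are uniformly c.e. unions of basic opens:
   there is a c.e. W with F^{-1}([n]) = U_{<n,m> in W} [m]. *)
Definition effective_preimages (SX : nat -> Prop) (RX : nat -> nat -> Prop)
  (SY : nat -> Prop) (F : (nat -> Prop) -> (nat -> Prop)) : Prop :=
  exists W : nat -> Prop, ce W /\
    forall n, SY n -> forall I, ideal SX RX I ->
      (F I n <-> exists m, W (pair n m) /\ I m).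

Definition computable_homeomorphism SX RX SY RY F : Prop :=
  exists G, homeo_with SX RX SY RY F G /\
    effective_preimages SX RX SY F /\ effective_preimages SY RY SX G.

Definition graph_of (X : nat -> Prop) (f : nat -> nat) : nat -> Prop :=
  fun p => exists x, X x /\ p = pair x (f x).

Definition enum_op (G : nat -> Prop) (I : nat -> Prop) : nat -> Prop :=
  fun n => exists m, I m /\ G (pair m n).

(* Main.v *)
Require Import Defs.
From Stdlib Require Import Arith Lia List Cantor.

Lemma up1 a b : unpair1 (pair a b) = a.
Proof. unfold unpair1, pair. now rewrite Cantor.cancel_of_to. Qed.
Lemma up2 a b : unpair2 (pair a b) = b.
Proof. unfold unpair2, pair. now rewrite Cantor.cancel_of_to. Qed.
Lemma pair_inj a b a' b' : pair a b = pair a' b' -> a = a' /\ b = b'.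
Proof. intro H. pose proof (f_equal unpair1 H). pose proof (f_equal unpair2 H).
  rewrite !up1 in *; rewrite !up2 in *. auto. Qed.
Lemma pair00 : pair 0 0 = 0. Proof. reflexivity. Qed.
Lemma pair_eq0 a b : pair a b = 0 -> a = 0 /\ b = 0.
Proof. intro H. rewrite <- pair00 in H. now apply pair_inj. Qed.

Lemma eval_det : forall c x v, eval c x v -> forall v', eval c x v' -> v = v'.
Proof.
  fix IH 4. intros c x v H. destruct H; intros v' H'.
  - inversion H'; auto.
  - inversion H'; auto.
  - inversion H'; auto.
  - inversion H'; auto.
  - inversion H'; auto.
  - inversion H'; subst.
    match goal with Hg : eval g x ?y0, Hf : eval f ?y0 v' |- _ =>
      pose proof (IH _ _ _ H _ Hg); subst; exact (IH _ _ _ H0 _ Hf) end.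
  - inversion H'; subst.
    match goal with Ha : eval f x ?a0, Hb : eval g x ?b0 |- _ =>
      pose proof (IH _ _ _ H _ Ha); pose proof (IH _ _ _ H0 _ Hb); subst; auto end.
  - remember (pair a 0) as p eqn:Ep; inversion H'; subst.
    + match goal with E : pair _ _ = pair _ _ |- _ => apply pair_inj in E; destruct E; subst end.
      match goal with Hf : eval f _ v' |- _ => exact (IH _ _ _ H _ Hf) end.
    + match goal with E : pair _ _ = pair _ _ |- _ => apply pair_inj in E; destruct E; discriminate end.
  - remember (pair a (S n)) as p eqn:Ep; inversion H'; subst.
    + match goal with E : pair _ _ = pair _ _ |- _ => apply pair_inj in E; destruct E; discriminate end.
    + match goal with E : pair _ _ = pair _ _ |- _ => apply pair_inj in E; destruct E as [? Hn]; injection Hn; intros; subst end.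
      match goal with Hr : eval (cRec f g) (pair _ _) ?y0, Hs : eval g (pair _ (pair _ ?y0)) v' |- _ =>
        pose proof (IH _ _ _ H _ Hr); subst; exact (IH _ _ _ H0 _ Hs) end.
  - inversion H'; subst.
    match goal with H2 : eval f (pair x v') 0, H4 : forall k, k < v' -> _ |- _ =>
    destruct (lt_eq_lt_dec n v') as [[Hl|He]|Hl]; auto;
    [ destruct (H4 n Hl) as [w d]; pose proof (IH _ _ _ H _ d); discriminate
    | destruct (H0 v' Hl) as [w d]; pose proof (IH _ _ _ d _ H2); discriminate ] end.
Qed.

Lemma ev_L' x r : unpair1 x = r -> eval cL x r.
Proof. intros <-; apply ev_L. Qed.
Ltac lfix := apply ev_L'; rewrite up1; reflexivity.

Lemma inv_Comp f g x z : eval (cComp f g) x z -> exists y, eval g x y /\ eval f y z.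
Proof. intro H. inversion H; subst; eauto. Qed.
Lemma inv_Pair f g x v : eval (cPair f g) x v -> exists a b, v = pair a b /\ eval f x a /\ eval g x b.
Proof. intro H. inversion H; subst; eauto. Qed.
Lemma inv_L x v : eval cL x v -> v = unpair1 x.
Proof. intro H. inversion H; subst; eauto. Qed.
Lemma inv_R x v : eval cR x v -> v = unpair2 x.
Proof. intro H. inversion H; subst; eauto. Qed.

Definition PRED' := cRec cZ (cComp cL cR).
Definition PRED := cComp PRED' (cPair cZ cI).
Definition SUB := cRec cI (cComp PRED (cComp cR cR)).
Definition SWAP := cPair cR cL.
Definition EQ := cPair SUB (cComp SUB SWAP).
Definition ZERO := cMu cL.
Definition D (c : code) := cComp ZERO (cComp EQ (cPair (cComp c cL) cR)).

Lemma PRED'_ok a n : eval PRED' (pair a n) (pred n).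
Proof. induction n.
  - apply ev_Rec0, ev_Z.
  - eapply ev_RecS. exact IHn. simpl.
    eapply ev_Comp. apply ev_R. rewrite up2. lfix.
Qed.
Lemma PRED_ok x : eval PRED x (pred x).
Proof. eapply ev_Comp. apply ev_Pair; [apply ev_Z | apply ev_I]. apply PRED'_ok. Qed.
Lemma SUB_ok a n : eval SUB (pair a n) (a - n).
Proof. induction n.
  - apply ev_Rec0. rewrite Nat.sub_0_r. apply ev_I.
  - eapply ev_RecS. exact IHn. eapply ev_Comp. eapply ev_Comp; apply ev_R.
    rewrite !up2. replace (a - S n) with (pred (a - n)) by lia. apply PRED_ok.
Qed.
Lemma EQ_ok a b : eval EQ (pair a b) (pair (a - b) (b - a)).
Proof. apply ev_Pair. apply SUB_ok. eapply ev_Comp.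
  - unfold SWAP. apply ev_Pair; [apply ev_R|apply ev_L].
  - rewrite up1, up2. apply SUB_ok.
Qed.
Lemma ZERO_dom x : (exists y, eval ZERO x y) <-> x = 0.
Proof. split.
  - intros [y H]. inversion H; subst. inversion H1; subst. now rewrite up1 in *.
  - intros ->. exists 0. apply ev_Mu. lfix. intros; lia.
Qed.

Lemma D_dom c p : (exists y, eval (D c) p y) <-> eval c (unpair1 p) (unpair2 p).
Proof. split.
  - intros [y H]. apply inv_Comp in H as [u [H Hz]].
    apply inv_Comp in H as [w [Hw He]].
    apply inv_Pair in Hw as [a [b [-> [Ha Hb]]]].
    apply inv_Comp in Ha as [q [Hq Ha]]. apply inv_L in Hq. apply inv_R in Hb. subst.
    pose proof (eval_det _ _ _ He _ (EQ_ok a (unpair2 p))). subst.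
    assert (pair (a - unpair2 p) (unpair2 p - a) = 0) by (apply ZERO_dom; eauto).
    apply pair_eq0 in H. replace (unpair2 p) with a by lia. auto.
  - intro H. assert (exists y, eval ZERO 0 y) as [y Hy] by (apply ZERO_dom; auto).
    exists y. eapply ev_Comp; [|exact Hy]. eapply ev_Comp.
    + apply ev_Pair; [eapply ev_Comp; [apply ev_L | exact H] | apply ev_R].
    + rewrite <- pair00, <- (Nat.sub_diag (unpair2 p)). apply EQ_ok.
Qed.

Lemma ce_graph c : ce (fun p => eval c (unpair1 p) (unpair2 p)).
Proof. exists (D c). intro. symmetry. apply D_dom. Qed.
Lemma ce_graph_swap c : ce (fun p => eval c (unpair2 p) (unpair1 p)).
Proof. exists (cComp (D c) SWAP). intro p. split.
  - intro H. assert (exists y, eval (D c) (pair (unpair2 p) (unpair1 p)) y) as [y Hy].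
    { apply D_dom. now rewrite up1, up2. }
    exists y. eapply ev_Comp; [|exact Hy]. apply ev_Pair; [apply ev_R|apply ev_L].
  - intros [y Hy]. apply inv_Comp in Hy as [w [Hw Hy]].
    apply inv_Pair in Hw as [a [b [-> [Ha Hb]]]]. apply inv_R in Ha. apply inv_L in Hb. subst.
    assert (eval c (unpair1 (pair (unpair2 p) (unpair1 p))) (unpair2 (pair (unpair2 p) (unpair1 p)))).
    { apply D_dom. eauto. } now rewrite up1, up2 in H.
Qed.

Definition Ginv (X : nat -> Prop) (f : nat -> nat) (J : nat -> Prop) : nat -> Prop :=
  fun x => X x /\ J (f x).

Lemma F_char X f I n : (forall m, I m -> X m) ->
  (enum_op (graph_of X f) I n <-> exists m, I m /\ f m = n).
Proof. intro HI. unfold enum_op, graph_of. split.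
  - intros [m [Im [x [Xx E]]]]. apply pair_inj in E as [-> ->]. eauto.
  - intros [m [Im <-]]. exists m. split; auto. exists m. split; auto.
Qed.

Theorem lemma20 (X Y : nat -> Prop) (RX RY : nat -> nat -> Prop) (f : nat -> nat) :
  transitive_on X RX -> transitive_on Y RY ->
  (forall x, X x -> Y (f x)) ->
  (forall y, Y y -> exists x, X x /\ f x = y) ->
  (forall x x', X x -> X x' -> (RX x x' <-> RY (f x) (f x'))) ->
  homeomorphism X RX Y RY (enum_op (graph_of X f)) /\
  (ce_rel X RX -> ce_rel Y RY -> computable_on X f ->
   computable_homeomorphism X RX Y RY (enum_op (graph_of X f))).
Proof.
  intros TX TY HXY Hsur Hiff.
  pose (F := enum_op (graph_of X f)).
  assert (HH : homeo_with X RX Y RY (enum_op (graph_of X f)) (Ginv X f)).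
  { refine (conj _ (conj _ (conj _ (conj _ (conj _ (conj _ (conj _ _))))))).
    - intros I [HI [[m0 Im0] [Hdown Hdir]]]. repeat split.
      + intros n Fn. apply (F_char X f I n HI) in Fn as [m [Im <-]]. auto.
      + exists (f m0). apply (F_char X f I _ HI). eauto.
      + intros a b Yb Rba Fa. apply (F_char X f I a HI) in Fa as [m [Im <-]].
        destruct (Hsur b Yb) as [x [Xx <-]]. apply (F_char X f I _ HI).
        exists x. split; auto. apply (Hdown m x Xx); auto. apply Hiff; auto.
      + intros a b Fa Fb. apply (F_char X f I a HI) in Fa as [m [Im <-]].
        apply (F_char X f I b HI) in Fb as [m' [Im' <-]].
        destruct (Hdir m m' Im Im') as [c [Ic [R1 R2]]].
        exists (f c). split. apply (F_char X f I _ HI); eauto.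
        split; apply Hiff; auto.
    - intros J [HJ [[n0 Jn0] [Hdown Hdir]]]. unfold Ginv. refine (conj _ (conj _ (conj _ _))).
      + intros n [Xn _]; auto.
      + destruct (Hsur n0 (HJ _ Jn0)) as [x [Xx <-]]. eauto.
      + intros a b Xb Rba [Xa Ja]. split; auto. apply (Hdown (f a)); auto. apply Hiff; auto.
      + intros a b [Xa Ja] [Xb Jb]. destruct (Hdir _ _ Ja Jb) as [c [Jc [R1 R2]]].
        destruct (Hsur c (HJ _ Jc)) as [x [Xx <-]]. exists x.
        split; [split; auto|]. split; apply Hiff; auto.
    - intros I [HI [_ [Hdown Hdir]]] x. unfold Ginv. split.
      + intros [Xx Fx]. apply (F_char X f I _ HI) in Fx as [m [Im E]].
        destruct (Hdir m m Im Im) as [c [Ic [R1 _]]].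
        apply (Hdown c x Xx); auto. apply Hiff; auto. rewrite <- E. apply Hiff; auto.
      + intro Ix. split; auto. apply (F_char X f I _ HI). eauto.
    - intros J [HJ _] n. assert (HG : forall m, Ginv X f J m -> X m) by (intros m [? _]; auto).
      rewrite (F_char X f _ n HG). unfold Ginv. split.
      + intros [m [[Xm Jm] <-]]. auto.
      + intro Jn. destruct (Hsur n (HJ _ Jn)) as [x [Xx <-]]. eauto.
    - intros I I' [HI _] [HI' _] S n. rewrite (F_char X f I n HI), (F_char X f I' n HI').
      split; intros [m [Im E]]; exists m; split; auto; apply S; auto.
    - intros J J' _ _ S n. unfold Ginv. rewrite (S (f n)). tauto.
    - intros n Yn I [HI _] Fn. apply (F_char X f I n HI) in Fn as [m [Im <-]].
      exists (m :: nil). split; [constructor; auto|]. split; [constructor; auto|].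
      intros J [HJ _] FJ. inversion FJ; subst. apply (F_char X f J _ HJ). eauto.
    - intros n Xn J [HJ _] [_ Jn]. exists (f n :: nil).
      split; [constructor; auto|]. split; [constructor; auto|].
      intros J' _ FJ. inversion FJ; subst. split; auto. }
  split. { exists (Ginv X f). exact HH. }
  intros _ _ [c Hc]. exists (Ginv X f). split; [exact HH|]. split.
  - exists (fun p => eval c (unpair2 p) (unpair1 p)). split; [apply ce_graph_swap|].
    intros n Yn I [HI _]. rewrite (F_char X f I n HI). split.
    + intros [m [Im <-]]. exists m. rewrite up1, up2. auto.
    + intros [m [E Im]]. rewrite up1, up2 in E. exists m. split; auto.
      symmetry. exact (eval_det _ _ _ E _ (Hc m (HI m Im))).
  - exists (fun p => eval c (unpair1 p) (unpair2 p)). split; [apply ce_graph|].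
    intros n Xn J [HJ _]. unfold Ginv. split.
    + intros [_ Jn]. exists (f n). rewrite up1, up2. auto.
    + intros [m [E Jm]]. rewrite up1, up2 in E. split; auto.
      rewrite (eval_det _ _ _ (Hc n Xn) _ E). auto.
Qed.
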